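(* Let $(X_+,X_-)$ be a Euclidean twin building, $(\Sigma_+,\Sigma_-)$ a twin apartment with identifications $\iota_\pm\colon\Sigma_\pm\to\mathbb{E}$, and let $h$ be the height function associated with a finite set $D$ that is $W$-invariant, satisfies $D=-D$, and is rich. Let $\sigma_+\subseteq\Sigma_+$ and $\sigma_-\subseteq\Sigma_-$ be cells and suppose there is a wall $H$ of $\mathbb{E}$ containing $\iota_+(\sigma_+)$ and $\iota_-(\sigma_-)$. Let $r_H$ be the reflection of $\mathbb{E}$ in $H$. Then for all $x_+\in\mathrm{St}(\sigma_+)\cap\Sigma_+$ and $x_-\in\mathrm{St}(\sigma_-)\cap\Sigma_-$ one has $h(\iota_+^{-1}r_H\iota_+(x_+),x_-)=h(x_+,x_-)$. The same holds with the roles of $+$ and $-$ interchanged.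
   Context: Let $W$ be the finite Weyl group of the buildings at infinity, acting linearly on a Euclidean vector space $\mathbb{E}$; the twin apartment is identified with $\mathbb{E}$ via isometries $\iota_\pm\colon\Sigma_\pm\to\mathbb{E}$ compatible with the Coxeter complex structures and with $\iota_+(x)=\iota_-(\mathrm{op}\,x)$ for the opposition bijection $\mathrm{op}\colon\Sigma_+\to\Sigma_-$; walls of $\mathbb{E}$ are the images of walls of $\Sigma_\pm$ (the two structures agree). $\mathrm{St}(\sigma)$ is the closed star of $\sigma$ (all cells containing $\sigma$ and their faces). $Z=Z((D+D)\cup D)$ with $Z(E)=\sum_{z\in E}[0,z]$ (Minkowski sum), and $h(x_+,x_-)=\mathrm{dist}(\iota_+(x_+)-\iota_-(x_-),Z)$. $D$ is rich if it contains $\iota_+(v)-\iota_+(w)$ for any two distinct vertices $v,w$ of any apartment $\Sigma_+$ of $X_+$ that lie in a common closed star of a cell (i.e. are joined by a path of at most two edges). *)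

(* Defs.v *)
From Stdlib Require Import Reals List ZArith ClassicalEpsilon.
From Stdlib Require Fin.
Open Scope R_scope.

Definition vec (n : nat) := Fin.t n -> R.

Fixpoint fsum (n : nat) : (Fin.t n -> R) -> R :=
  match n return (Fin.t n -> R) -> R with
  | O => fun _ => 0
  | S m => fun f => f Fin.F1 + fsum m (fun i => f (Fin.FS i))
  end.

Definition vzero {n} : vec n := fun _ => 0.
Definition vadd {n} (x y : vec n) : vec n := fun i => x i + y i.
Definition vopp {n} (x : vec n) : vec n := fun i => - x i.
Definition vsub {n} (x y : vec n) : vec n := vadd x (vopp y).
Definition vscale {n} (c : R) (x : vec n) : vec n := fun i => c * x i.
Definition dot {n} (x y : vec n) : R := fsum n (fun i => x i * y i).
Definition vnorm {n} (x : vec n) : R := sqrt (dot x x).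

Definition lin_refl {n} (a x : vec n) : vec n :=
  vsub x (vscale (2 * dot x a / dot a a) a).

(** It is given by a (possibly non-reduced) crystallographic root system
    [Phi] spanning E and a special point [o]: the walls are the affine
    hyperplanes H_{a,k} = { x | <a, x - o> = k }, a in Phi, k in Z. *)
Definition is_root_system {n} (Phi : list (vec n)) : Prop :=
  (forall a, In a Phi -> a <> vzero) /\
  (forall a b, In a Phi -> In b Phi -> In (lin_refl a b) Phi) /\
  (forall a b, In a Phi -> In b Phi ->
     exists m : Z, 2 * dot b a / dot a a = IZR m) /\
  (forall x : vec n, (forall a, In a Phi -> dot a x = 0) -> x = vzero).

Definition in_W {n} (Phi : list (vec n)) (f : vec n -> vec n) : Prop :=
  exists l : list (vec n), Forall (fun a => In a Phi) l /\
    forall x, f x = fold_right lin_refl x l.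

Definition on_wall {n} (o a : vec n) (k : Z) (x : vec n) : Prop :=
  dot a (vsub x o) = IZR k.

Definition aff_refl {n} (o a : vec n) (k : Z) (x : vec n) : vec n :=
  vsub x (vscale (2 * (dot a (vsub x o) - IZR k) / dot a a) a).

Definition same_cell {n} (Phi : list (vec n)) (o : vec n) (x y : vec n) : Prop :=
  forall a (k : Z), In a Phi ->
    (dot a (vsub x o) < IZR k <-> dot a (vsub y o) < IZR k) /\
    (dot a (vsub x o) = IZR k <-> dot a (vsub y o) = IZR k).

Definition is_cell {n} (Phi : list (vec n)) (o : vec n) (c : vec n -> Prop) : Prop :=
  exists x, forall y, c y <-> same_cell Phi o x y.

Definition in_closure {n} (S : vec n -> Prop) (y : vec n) : Prop :=
  forall eps, 0 < eps -> exists z, S z /\ vnorm (vsub y z) < eps.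

Definition is_face {n} (s t : vec n -> Prop) : Prop :=
  forall x, s x -> in_closure t x.

Definition in_star {n} (Phi : list (vec n)) (o : vec n) (s : vec n -> Prop)
  (x : vec n) : Prop :=
  exists t r, is_cell Phi o t /\ is_face s t /\
              is_cell Phi o r /\ is_face r t /\ r x.

Definition is_vertex {n} (Phi : list (vec n)) (o : vec n) (v : vec n) : Prop :=
  is_cell Phi o (fun y => y = v).

Definition image {n} {S : Type} (i : S -> vec n) (s : S -> Prop) : vec n -> Prop :=
  fun y => exists x, s x /\ i x = y.

Definition S_cell {n} {S : Type} (Phi : list (vec n)) (o : vec n)
  (i : S -> vec n) (s : S -> Prop) : Prop := is_cell Phi o (image i s).

Definition S_star {n} {S : Type} (Phi : list (vec n)) (o : vec n)
  (i : S -> vec n) (s : S -> Prop) (x : S) : Prop := in_star Phi o (image i s) (i x).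

Definition S_vertex {n} {S : Type} (Phi : list (vec n)) (o : vec n)
  (i : S -> vec n) (v : S) : Prop := is_vertex Phi o (i v).

Definition W_invariant {n} (Phi : list (vec n)) (D : list (vec n)) : Prop :=
  forall f, in_W Phi f -> forall d, In d D -> In (f d) D.

Definition symmetric_set {n} (D : list (vec n)) : Prop :=
  forall d, In d D -> In (vopp d) D.

(** Richness, stated for the apartment Sigma_+ with identification iota_+. *)
Definition rich {n} {S : Type} (Phi : list (vec n)) (o : vec n)
  (i : S -> vec n) (D : list (vec n)) : Prop :=
  forall (s : S -> Prop) (v w : S),
    S_cell Phi o i s -> S_vertex Phi o i v -> S_vertex Phi o i w -> v <> w ->
    S_star Phi o i s v -> S_star Phi o i s w -> In (vsub (i v) (i w)) D.

Definition DDuD {n} (D : list (vec n)) (z : vec n) : Prop :=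
  In z D \/ exists d1 d2, In d1 D /\ In d2 D /\ z = vadd d1 d2.

Definition in_zonotope {n} (S : vec n -> Prop) (v : vec n) : Prop :=
  exists L : list (vec n), NoDup L /\ (forall z, In z L <-> S z) /\
  exists t : vec n -> R, (forall z, 0 <= t z <= 1) /\
    v = fold_right (fun z acc => vadd (vscale (t z) z) acc) vzero L.

Definition is_inf (A : R -> Prop) (m : R) : Prop :=
  (forall r, A r -> m <= r) /\ (forall m', (forall r, A r -> m' <= r) -> m' <= m).

Definition dist_set {n} (v : vec n) (Z : vec n -> Prop) : R :=
  epsilon (inhabits 0)
    (fun m => is_inf (fun r => exists z, Z z /\ r = vnorm (vsub v z)) m).

Definition height {n} {Sp Sm : Type} (D : list (vec n))
  (ip : Sp -> vec n) (im : Sm -> vec n) (xp : Sp) (xm : Sm) : R :=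
  dist_set (vsub (ip xp) (im xm)) (in_zonotope (DDuD D)).

(* Main.v *)
Require Import Defs.
From Stdlib Require Import Reals List ZArith.
From Stdlib Require Import ClassicalEpsilon Classical FunctionalExtensionality Lra Lia Permutation.
Open Scope R_scope.

Ltac vext := apply functional_extensionality; intro.
Ltac vring := vext; unfold vsub, vadd, vscale, vopp, vzero; ring.

Lemma fsum_ext n (f g : Fin.t n -> R) : (forall i, f i = g i) -> fsum n f = fsum n g.
Proof. induction n; simpl; intros H; auto. rewrite H, (IHn (fun i => f (Fin.FS i)) (fun i => g (Fin.FS i))); auto. Qed.

Lemma fsum_add n (f g : Fin.t n -> R) : fsum n (fun i => f i + g i) = fsum n f + fsum n g.
Proof. induction n; simpl; [ring|]. rewrite (IHn (fun i => f (Fin.FS i)) (fun i => g (Fin.FS i))); ring. Qed.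

Lemma fsum_scal n c (f : Fin.t n -> R) : fsum n (fun i => c * f i) = c * fsum n f.
Proof. induction n; simpl; [ring|]. rewrite (IHn (fun i => f (Fin.FS i))); ring. Qed.

Lemma fsum_nonneg n (f : Fin.t n -> R) : (forall i, 0 <= f i) -> 0 <= fsum n f.
Proof. induction n; simpl; intros H; [lra|]. pose proof (H Fin.F1).
  pose proof (IHn (fun i => f (Fin.FS i)) (fun i => H _)). lra. Qed.

Lemma fsum_zero_inv n (f : Fin.t n -> R) : (forall i, 0 <= f i) -> fsum n f = 0 -> forall i, f i = 0.
Proof. induction n; simpl; intros H E i. inversion i.
  pose proof (H Fin.F1). pose proof (fsum_nonneg _ (fun i => f (Fin.FS i)) (fun i => H _)).
  assert (f Fin.F1 = 0) by lra. assert (fsum n (fun i => f (Fin.FS i)) = 0) by lra.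
  pattern i; apply (@Fin.caseS' n i); auto.
  intro p. apply (IHn (fun i => f (Fin.FS i))); auto. Qed.

Lemma dot_comm n (x y : vec n) : dot x y = dot y x.
Proof. unfold dot; apply fsum_ext; intros; ring. Qed.
Lemma dot_add_r n (x y z : vec n) : dot x (vadd y z) = dot x y + dot x z.
Proof. unfold dot, vadd. rewrite <- fsum_add. apply fsum_ext; intros; ring. Qed.
Lemma dot_add_l n (x y z : vec n) : dot (vadd y z) x = dot y x + dot z x.
Proof. rewrite dot_comm, dot_add_r, (dot_comm _ x y), (dot_comm _ x z); auto. Qed.
Lemma dot_scale_r n c (x y : vec n) : dot x (vscale c y) = c * dot x y.
Proof. unfold dot, vscale. rewrite <- fsum_scal. apply fsum_ext; intros; ring. Qed.
Lemma dot_scale_l n c (x y : vec n) : dot (vscale c y) x = c * dot y x.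
Proof. rewrite dot_comm, dot_scale_r, dot_comm; auto. Qed.
Lemma dot_opp_r n (x y : vec n) : dot x (vopp y) = - dot x y.
Proof. replace (vopp y) with (vscale (-1) y) by vring. rewrite dot_scale_r; ring. Qed.
Lemma dot_opp_l n (x y : vec n) : dot (vopp y) x = - dot y x.
Proof. rewrite dot_comm, dot_opp_r, dot_comm; auto. Qed.
Lemma dot_sub_r n (x y z : vec n) : dot x (vsub y z) = dot x y - dot x z.
Proof. unfold vsub. rewrite dot_add_r, dot_opp_r; ring. Qed.
Lemma dot_sub_l n (x y z : vec n) : dot (vsub y z) x = dot y x - dot z x.
Proof. unfold vsub. rewrite dot_add_l, dot_opp_l; ring. Qed.
Lemma dot_zero_r n (x : vec n) : dot x vzero = 0.
Proof. replace (@vzero n) with (vscale 0 x) by vring. rewrite dot_scale_r; ring. Qed.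
Lemma dot_nonneg n (x : vec n) : 0 <= dot x x.
Proof. unfold dot; apply fsum_nonneg; intros; apply Rle_0_sqr. Qed.
Lemma dot_pos n (x : vec n) : x <> vzero -> 0 < dot x x.
Proof. intros H. destruct (dot_nonneg n x) as [|E]; auto. exfalso; apply H.
  vext. unfold vzero. symmetry in E. pose proof (fsum_zero_inv n (fun i => x i * x i) (fun i => Rle_0_sqr _) E x0).
  simpl in H0. nra. Qed.

Lemma vnorm_lt_sq n (v : vec n) e : vnorm v < e -> dot v v < e * e.
Proof. unfold vnorm; intros H. pose proof (dot_nonneg n v). pose proof (sqrt_pos (dot v v)).
  rewrite <- (sqrt_sqrt (dot v v)) by auto. nra. Qed.

Lemma vnorm_le n (u v : vec n) : dot u u <= dot v v -> vnorm u <= vnorm v.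
Proof. unfold vnorm; intros; apply sqrt_le_1_alt; auto. Qed.

Lemma vnorm_scale n c (v : vec n) : 0 <= c -> vnorm (vscale c v) = c * vnorm v.
Proof. intros. unfold vnorm. rewrite dot_scale_l, dot_scale_r, <- Rmult_assoc, sqrt_mult_alt.
  rewrite sqrt_square; auto. nra. Qed.

Lemma vnorm_nonneg n (v : vec n) : 0 <= vnorm v.
Proof. apply sqrt_pos. Qed.

Lemma dot_bound n (b v : vec n) l : 0 < l -> 2 * Rabs (dot b v) <= l * dot b b + dot v v / l.
Proof. intros Hl.
  assert (H1 : 0 <= dot (vsub (vscale l b) v) (vsub (vscale l b) v)) by apply dot_nonneg.
  assert (H2 : 0 <= dot (vadd (vscale l b) v) (vadd (vscale l b) v)) by apply dot_nonneg.
  rewrite !dot_sub_l, !dot_sub_r, !dot_add_l, !dot_add_r, !dot_scale_l, !dot_scale_r in *.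
  rewrite (dot_comm _ v b) in *.
  assert (E: dot v v / l = dot v v * / l) by (unfold Rdiv; auto). rewrite E.
  assert (0 < /l) by (apply Rinv_0_lt_compat; auto).
  assert (l * / l = 1) by (field; lra).
  assert (E1: (l*l * dot b b + 2 * l * dot b v + dot v v) * / l = l * dot b b + 2 * dot b v + dot v v * / l) by (field; lra).
  assert (E2: (l*l * dot b b - 2 * l * dot b v + dot v v) * / l = l * dot b b - 2 * dot b v + dot v v * / l) by (field; lra).
  assert (0 <= (l*l * dot b b + 2 * l * dot b v + dot v v) * / l) by (apply Rmult_le_pos; nra).
  assert (0 <= (l*l * dot b b - 2 * l * dot b v + dot v v) * / l) by (apply Rmult_le_pos; nra).
  unfold Rabs; destruct (Rcase_abs (dot b v)); lra.
Qed.
Section Cells.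
Context {n : nat} (Phi : list (vec n)) (o : vec n).

Lemma approx (t : vec n -> Prop) y b g : in_closure t y -> 0 < g ->
  exists z, t z /\ Rabs (dot b (vsub y o) - dot b (vsub z o)) < g.
Proof.
  intros Hc Hg. set (B := dot b b). assert (0 <= B) by apply dot_nonneg.
  set (l := g / (B + 1)). assert (Hl : 0 < l) by (unfold l; apply Rdiv_lt_0_compat; lra).
  assert (HlB : l * B < g).
  { unfold l. apply (Rmult_lt_reg_r (B+1)); [lra|]. field_simplify; [|lra]. unfold Rdiv. nra. }
  set (eps := Rmin 1 (g * l / 2)).
  assert (He : 0 < eps) by (unfold eps; apply Rmin_pos; nra).
  destruct (Hc eps He) as [z [Hz Hn]]. exists z; split; auto.
  apply vnorm_lt_sq in Hn.
  assert (eps <= 1) by apply Rmin_l. assert (eps <= g * l / 2) by apply Rmin_r.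
  assert (Hv : dot (vsub y z) (vsub y z) < g * l / 2) by nra.
  pose proof (dot_bound n b (vsub y z) l Hl).
  assert (dot (vsub y z) (vsub y z) / l < g / 2).
  { apply (Rmult_lt_reg_r l); auto. field_simplify; lra. }
  replace (dot b (vsub y o) - dot b (vsub z o)) with (dot b (vsub y z)).
  2:{ rewrite !dot_sub_r; ring. }
  fold B in H2. lra.
Qed.

Definition weak (x y : vec n) : Prop := forall b (k : Z), In b Phi ->
  (dot b (vsub x o) < IZR k -> dot b (vsub y o) <= IZR k) /\
  (dot b (vsub x o) = IZR k -> dot b (vsub y o) = IZR k) /\
  (IZR k < dot b (vsub x o) -> IZR k <= dot b (vsub y o)).

Lemma closure_if x y : weak x y -> in_closure (same_cell Phi o x) y.
Proof.
  intros Hw eps He. set (N := vnorm (vsub y x)). assert (0 <= N) by apply vnorm_nonneg.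
  set (e := Rmin 1 (eps / (2 * (N + 1)))).
  assert (Hp : 0 < e) by (unfold e; apply Rmin_pos; [lra| apply Rdiv_lt_0_compat; lra]).
  assert (He1 : e <= 1) by apply Rmin_l.
  assert (He2 : e <= eps / (2 * (N+1))) by apply Rmin_r.
  exists (vadd y (vscale e (vsub x y))). split.
  - intros b k Hb. destruct (Hw b k Hb) as [H1 [H2 H3]].
    assert (E : dot b (vsub (vadd y (vscale e (vsub x y))) o) =
                (1 - e) * dot b (vsub y o) + e * dot b (vsub x o)).
    { replace (vsub (vadd y (vscale e (vsub x y))) o) with
        (vadd (vscale (1 - e) (vsub y o)) (vscale e (vsub x o))) by vring.
      rewrite dot_add_r, !dot_scale_r; ring. }
    rewrite E. set (X := dot b (vsub x o)) in *. set (Y := dot b (vsub y o)) in *.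
    destruct (Rtotal_order X (IZR k)) as [Hx|[Hx|Hx]].
    + specialize (H1 Hx). split; split; intros; nra.
    + specialize (H2 Hx). split; split; intros; nra.
    + specialize (H3 Hx). split; split; intros; nra.
  - replace (vsub y (vadd y (vscale e (vsub x y)))) with (vscale e (vsub y x)) by vring.
    rewrite vnorm_scale by lra. fold N.
    assert (e * N <= eps / (2 * (N+1)) * N) by nra.
    assert (eps / (2 * (N+1)) * N < eps).
    { apply (Rmult_lt_reg_r (2 * (N+1))); [lra|]. field_simplify; nra. }
    lra.
Qed.

Lemma weak_transfer x y0 y : weak x y0 -> same_cell Phi o y0 y -> weak x y.
Proof.
  intros Hw Hs b k Hb. destruct (Hw b k Hb) as [H1 [H2 H3]]. destruct (Hs b k Hb) as [[A1 A2] [B1 B2]].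
  split; [|split]; intros H.
  - specialize (H1 H). destruct H1 as [H1|H1]; [left; apply A1; auto|right; apply B1; auto].
  - apply B1, H2, H.
  - specialize (H3 H). destruct H3 as [H3|H3]; [|right; symmetry; apply B1; auto].
    left. destruct (Rtotal_order (dot b (vsub y o)) (IZR k)) as [C|[C|C]]; auto.
    + apply A2 in C. lra.
    + apply B2 in C. lra.
Qed.

Lemma vertex_lattice v : is_root_system Phi ->
  (forall b, In b Phi -> exists z, dot b (vsub v o) = IZR z) -> is_vertex Phi o v.
Proof.
  intros [_ [_ [_ Hspan]]] Hl. exists v. intros y; split.
  - intros ->. intros b k _. split; split; auto.
  - intros Hs. assert (vsub y v = vzero).
    { apply Hspan. intros b Hb. destruct (Hl b Hb) as [z Hz].
      destruct (Hs b z Hb) as [_ [A _]]. specialize (A Hz).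
      replace (vsub y v) with (vsub (vsub y o) (vsub v o)) by vring.
      rewrite dot_sub_r; lra. }
    vext. assert (E := f_equal (fun f => f x) H). simpl in E. unfold vsub, vadd, vopp, vzero in E. lra.
Qed.

End Cells.
Definition Rsum {A} (L : list A) (f : A -> R) : R := fold_right (fun x acc => f x + acc) 0 L.
Definition VS {n A} (L : list A) (F : A -> vec n) : vec n := fold_right (fun z acc => vadd (F z) acc) vzero L.

Lemma Rsum_perm {A} (L1 L2 : list A) f : Permutation L1 L2 -> Rsum L1 f = Rsum L2 f.
Proof. induction 1; simpl; auto; try lra. Qed.
Lemma Rsum_map {A B} (L : list A) (g : A -> B) f : Rsum (map g L) f = Rsum L (fun x => f (g x)).
Proof. induction L; simpl; auto. rewrite IHL; auto. Qed.
Lemma Rsum_add {A} (L : list A) f g : Rsum L (fun x => f x + g x) = Rsum L f + Rsum L g.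
Proof. induction L; simpl; [ring|]. rewrite IHL; ring. Qed.
Lemma Rsum_scal {A} (L : list A) c f : Rsum L (fun x => c * f x) = c * Rsum L f.
Proof. induction L; simpl; [ring|]. rewrite IHL; ring. Qed.
Lemma Rsum_ext {A} (L : list A) f g : (forall x, In x L -> f x = g x) -> Rsum L f = Rsum L g.
Proof. induction L; simpl; intros H; auto. rewrite H, IHL; auto. Qed.
Lemma Rsum_nonneg {A} (L : list A) f : (forall x, In x L -> 0 <= f x) -> 0 <= Rsum L f.
Proof. induction L; simpl; intros H; [lra|]. pose proof (H a (or_introl eq_refl)).
  pose proof (IHL (fun x h => H x (or_intror h))). lra. Qed.
Lemma Rsum_ge_mem {A} (L : list A) f x : (forall x, In x L -> 0 <= f x) -> In x L -> f x <= Rsum L f.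
Proof. induction L; simpl; intros H Hx; [contradiction|].
  pose proof (H a (or_introl eq_refl)). pose proof (Rsum_nonneg L f (fun x h => H x (or_intror h))).
  destruct Hx as [<-|Hx]; [lra|]. pose proof (IHL (fun x h => H x (or_intror h)) Hx). lra. Qed.

Section VSl.
Context {n : nat}.
Lemma VS_perm {A} (L1 L2 : list A) (F : A -> vec n) : Permutation L1 L2 -> VS L1 F = VS L2 F.
Proof. induction 1; simpl; auto; try congruence. vring. Qed.
Lemma VS_map {A B} (L : list A) (g : A -> B) (F : B -> vec n) : VS (map g L) F = VS L (fun x => F (g x)).
Proof. induction L; simpl; auto. rewrite IHL; auto. Qed.
Lemma VS_add {A} (L : list A) (F G : A -> vec n) : VS L (fun x => vadd (F x) (G x)) = vadd (VS L F) (VS L G).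
Proof. induction L; simpl. vring. rewrite IHL; vring. Qed.
Lemma VS_scale {A} (L : list A) c (F : A -> vec n) : VS L (fun x => vscale c (F x)) = vscale c (VS L F).
Proof. induction L; simpl. vring. rewrite IHL; vring. Qed.
Lemma VS_ext {A} (L : list A) (F G : A -> vec n) : (forall x, In x L -> F x = G x) -> VS L F = VS L G.
Proof. induction L; simpl; intros H; auto. rewrite H, IHL; auto. Qed.
Lemma VS_zero {A} (L : list A) (F : A -> vec n) : (forall x, In x L -> F x = vzero) -> VS L F = vzero.
Proof. induction L; simpl; intros H; auto. rewrite H, IHL; auto. vring. Qed.
Lemma VS_single {A} (L : list A) (F : A -> vec n) e : NoDup L -> In e L ->
  (forall x, x <> e -> F x = vzero) -> VS L F = F e.
Proof. induction L; simpl; intros Hnd He H; [contradiction|]. inversion Hnd; subst.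
  destruct (classic (a = e)) as [<-|Hne].
  - rewrite VS_zero. vring. intros x Hx. apply H. intros ->. contradiction.
  - rewrite H by auto. destruct He as [He|He]; [contradiction|]. rewrite IHL; auto. vring.
Qed.
Lemma VS_lin {A} (L : list A) (F : A -> vec n) (f : vec n -> vec n) :
  f vzero = vzero -> (forall x y, f (vadd x y) = vadd (f x) (f y)) ->
  f (VS L F) = VS L (fun x => f (F x)).
Proof. intros H0 Ha. induction L; simpl; auto. rewrite Ha, IHL; auto. Qed.
End VSl.

Lemma nodup_exists {A} (l : list A) : exists L, NoDup L /\ forall x, In x L <-> In x l.
Proof. induction l as [|a l IH]. exists nil; split; [constructor|tauto].
  destruct IH as [L [HL HI]]. destruct (classic (In a L)).
  - exists L; split; auto. intros x; simpl; rewrite HI. split; [tauto|]. intros [<-|h]; auto. apply HI; auto.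
  - exists (a :: L); split; [constructor; auto|]. intros x; simpl; rewrite HI; tauto.
Qed.

Lemma perm_invol {A} (L : list A) f : NoDup L -> (forall x, In x L -> In (f x) L) ->
  (forall x, f (f x) = x) -> Permutation L (map f L).
Proof. intros Hnd Hin Hf. apply NoDup_Permutation; auto.
  - apply FinFun.Injective_map_NoDup; auto. intros x y E. rewrite <- (Hf x), <- (Hf y), E; auto.
  - intros x; rewrite in_map_iff; split.
    + intros Hx. exists (f x); split; auto.
    + intros [y [<- Hy]]; auto.
Qed.

Lemma min_nat (P : nat -> Prop) : (exists N, P N) -> exists N, P N /\ forall M, P M -> (N <= M)%nat.
Proof. intros [N HN]. revert HN. induction N as [N IH] using (well_founded_induction lt_wf).
  intros HN. destruct (classic (exists M, P M /\ (M < N)%nat)) as [[M [HM HMN]]|Hno].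
  - apply (IH M HMN HM).
  - exists N; split; auto. intros M HM. destruct (Nat.lt_ge_cases M N); auto. exfalso; eauto.
Qed.
Section Refl.
Context {n : nat}.
Ltac vfield := vext; unfold lin_refl, vsub, vadd, vscale, vopp, vzero; field; auto.

Lemma lin_refl_add (a x y : vec n) : lin_refl a (vadd x y) = vadd (lin_refl a x) (lin_refl a y).
Proof. unfold lin_refl. rewrite dot_add_l. vext; unfold vsub, vadd, vscale, vopp; unfold Rdiv; ring. Qed.
Lemma lin_refl_zero (a : vec n) : lin_refl a vzero = vzero.
Proof. unfold lin_refl. rewrite dot_comm, dot_zero_r. vext; unfold vsub, vadd, vscale, vopp, vzero; unfold Rdiv; ring. Qed.
Lemma lin_refl_scale (a x : vec n) c : lin_refl a (vscale c x) = vscale c (lin_refl a x).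
Proof. unfold lin_refl. rewrite dot_scale_l. vext; unfold vsub, vadd, vscale, vopp; unfold Rdiv; ring. Qed.
Lemma lin_refl_dot_a (a x : vec n) : dot a a <> 0 -> dot (lin_refl a x) a = - dot x a.
Proof. intros. unfold lin_refl. rewrite dot_sub_l, dot_scale_l. field; auto. Qed.
Lemma lin_refl_invol (a x : vec n) : dot a a <> 0 -> lin_refl a (lin_refl a x) = x.
Proof. intros H. unfold lin_refl at 1. rewrite lin_refl_dot_a by auto. unfold lin_refl. vfield. Qed.
Lemma lin_refl_adj (a x y : vec n) : dot (lin_refl a x) y = dot x (lin_refl a y).
Proof. unfold lin_refl. rewrite dot_sub_l, dot_sub_r, dot_scale_l, dot_scale_r, (dot_comm _ a y).
  unfold Rdiv; ring. Qed.
Lemma lin_refl_fix (a x : vec n) : dot x a = 0 -> lin_refl a x = x.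
Proof. intros H. unfold lin_refl. rewrite H. vext; unfold vsub, vadd, vscale, vopp; unfold Rdiv; ring. Qed.
End Refl.

Section Lattice.
Context {n : nat} (Phi : list (vec n)).
Definition Lat (x : vec n) := forall b, In b Phi -> exists z, dot b x = IZR z.
Definition cor (b : vec n) := vscale (2 / dot b b) b.

Lemma dot_cor_self b : dot b b <> 0 -> dot b (cor b) = 2.
Proof. intros; unfold cor; rewrite dot_scale_r; field; auto. Qed.

Lemma Lat_cor b : is_root_system Phi -> In b Phi -> Lat (cor b).
Proof. intros [_ [_ [Hc _]]] Hb x Hx. destruct (Hc b x Hb Hx) as [m Hm]. exists m.
  unfold cor; rewrite dot_scale_r. rewrite <- Hm. unfold Rdiv; ring. Qed.

Lemma Lat_comb c y (m : Z) : Lat c -> Lat y -> Lat (vsub c (vscale (IZR m) y)).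
Proof. intros Hc Hy b Hb. destruct (Hc b Hb) as [z1 H1]. destruct (Hy b Hb) as [z2 H2].
  exists (z1 - m * z2)%Z. rewrite dot_sub_r, dot_scale_r, H1, H2, minus_IZR, mult_IZR; ring. Qed.

Definition Q (L : list (vec n)) x := Rsum L (fun b => dot b x * dot b x).

Lemma Q_nat L x : (forall b, In b L -> In b Phi) -> Lat x -> exists N, Q L x = INR N.
Proof. intros HL Hx. induction L as [|b L IH]. exists 0%nat; reflexivity.
  destruct IH as [N HN]. intros; apply HL; simpl; auto.
  destruct (Hx b (HL b (or_introl eq_refl))) as [z Hz].
  exists (Z.to_nat (z * z) + N)%nat. unfold Q; simpl. fold (Q L x). rewrite HN, plus_INR, Hz.
  rewrite (INR_IZR_INZ (Z.to_nat _)), Z2Nat.id by nia. rewrite mult_IZR; ring. Qed.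

Lemma Zbig (z : Z) : 2 < Rabs (IZR z) -> 3 <= IZR z \/ IZR z <= -3.
Proof. intros H. destruct (Z_le_gt_dec 3 z) as [h|h]; [left; apply IZR_le in h; auto|].
  destruct (Z_le_gt_dec z (-3)) as [h2|h2]; [right; apply IZR_le in h2; auto|].
  exfalso. assert (h3 : (-2 <= z <= 2)%Z) by lia. destruct h3 as [h3 h4].
  apply IZR_le in h3. apply IZR_le in h4. unfold Rabs in H; destruct (Rcase_abs (IZR z)); lra. Qed.

Lemma exists_short a : is_root_system Phi -> In a Phi ->
  exists c, Lat c /\ dot a c <> 0 /\ forall b, In b Phi -> Rabs (dot b c) <= 2.
Proof.
  intros HR Ha. pose proof HR as [Hnz [Hcl [Hcr Hsp]]].
  destruct (nodup_exists Phi) as [L [HL HLI]].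
  assert (HLP : forall b, In b L -> In b Phi) by (intros; apply HLI; auto).
  assert (Hnz' : forall b, In b Phi -> dot b b <> 0).
  { intros b Hb. pose proof (dot_pos n b (Hnz b Hb)). lra. }
  set (good := fun N => exists c, Lat c /\ dot a c <> 0 /\ Q L c = INR N).
  destruct (min_nat good) as [N0 [[c0 [Hc0 [Ha0 HQ0]]] Hmin]].
  { destruct (Q_nat L (cor a) HLP (Lat_cor a HR Ha)) as [N HN]. exists N, (cor a).
    rewrite dot_cor_self by auto. split; [apply Lat_cor; auto|split; auto; lra]. }
  exists c0; repeat split; auto. intros b Hb.
  destruct (Rle_dec (Rabs (dot b c0)) 2) as [|Hgt]; auto. exfalso. apply Rnot_le_lt in Hgt.
  destruct (Hc0 b Hb) as [nb Hnb]. rewrite Hnb in Hgt. apply Zbig in Hgt.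
  set (y := cor b).
  assert (Hbb := Hnz' b Hb).
  set (s := lin_refl b).
  set (cp := vsub c0 (vscale (IZR nb / 2) y)).
  assert (Hcp : dot cp b = 0).
  { unfold cp. rewrite dot_sub_l, dot_scale_l, dot_comm, Hnb. unfold y; rewrite dot_comm, dot_cor_self by auto. field. }
  assert (HB0 : Rsum L (fun x => dot x cp * dot x y) = 0).
  { assert (Hperm : Permutation L (map s L)).
    { apply perm_invol; auto. intros x Hx. apply HLI. apply Hcl; auto. intros; apply lin_refl_invol; auto. }
    assert (E : forall x, dot (s x) cp * dot (s x) y = - (dot x cp * dot x y)).
    { intros x. unfold s. rewrite !lin_refl_adj. rewrite lin_refl_fix by auto.
      assert (lin_refl b y = vopp y).
      { unfold y, cor, lin_refl. rewrite dot_scale_l. vext; unfold vsub, vadd, vscale, vopp; field; auto. }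
      rewrite H, dot_opp_r; ring. }
    assert (Rsum L (fun x => dot x cp * dot x y) = (-1) * Rsum L (fun x => dot x cp * dot x y)).
    { rewrite <- Rsum_scal. rewrite (Rsum_perm _ _ _ Hperm) at 1. rewrite Rsum_map.
      apply Rsum_ext. intros x _. rewrite E; ring. }
    lra. }
  assert (HQy : 4 <= Q L y).
  { unfold Q. assert (In b L) by (apply HLI; auto).
    pose proof (Rsum_ge_mem L (fun x => dot x y * dot x y) b (fun x _ => Rle_0_sqr _) H).
    simpl in H0. unfold y in H0 at 1 2. rewrite dot_cor_self in H0 by auto. lra. }
  assert (HQexp : forall mu, Q L (vsub c0 (vscale mu y)) = Q L c0 + (mu * mu - mu * IZR nb) * Q L y).
  { intros mu. unfold Q.
    assert (c0 = vadd cp (vscale (IZR nb / 2) y)) as Ec by (unfold cp; vring).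
    transitivity (Rsum L (fun x => dot x c0 * dot x c0 + (-2 * mu) * (dot x cp * dot x y)
                                   + (mu * mu - mu * IZR nb) * (dot x y * dot x y))).
    - apply Rsum_ext; intros x _. rewrite dot_sub_r, dot_scale_r.
      assert (Hx: dot x c0 = dot x cp + IZR nb / 2 * dot x y) by (unfold cp; rewrite dot_sub_r, dot_scale_r; ring).
      rewrite Hx. field.
    - rewrite !Rsum_add, !Rsum_scal, HB0. ring. }
  assert (Hcand : forall m : Z, dot a (vsub c0 (vscale (IZR m) y)) <> 0 ->
                  IZR m * IZR m - IZR m * IZR nb < 0 -> False).
  { intros m Ham Hneg.
    assert (HL' := Lat_comb c0 y m Hc0 (Lat_cor b HR Hb)).
    destruct (Q_nat L _ HLP HL') as [M HM].
    assert (good M) by (exists (vsub c0 (vscale (IZR m) y)); repeat split; auto).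
    specialize (Hmin M H). apply le_INR in Hmin. rewrite <- HM, <- HQ0 in Hmin.
    rewrite HQexp in Hmin. assert (0 < Q L y) by lra.
    assert ((IZR m * IZR m - IZR m * IZR nb) * Q L y < 0) by (apply Rmult_neg_pos; auto). lra. }
  set (ty := dot a y).
  assert (Ed : forall m, dot a (vsub c0 (vscale m y)) = dot a c0 - m * ty).
  { intros; rewrite dot_sub_r, dot_scale_r; auto. }
  destruct Hgt as [Hg|Hg].
  - destruct (Req_dec (dot a c0 - 1 * ty) 0) as [E1|E1].
    + apply (Hcand 2%Z); [rewrite Ed; lra| simpl; nra].
    + apply (Hcand 1%Z); [rewrite Ed; simpl; lra| simpl; nra].
  - destruct (Req_dec (dot a c0 - (-1) * ty) 0) as [E1|E1].
    + apply (Hcand (-2)%Z); [rewrite Ed; simpl; lra| simpl; nra].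
    + apply (Hcand (-1)%Z); [rewrite Ed; simpl; lra| simpl; nra].
Qed.
End Lattice.
Section Zono.
Context {n : nat} (Phi : list (vec n)) (D : list (vec n)) (a : vec n).
Hypothesis HW : W_invariant Phi D.
Hypothesis Hsym : symmetric_set D.
Hypothesis Ha : In a Phi.
Hypothesis Haa : dot a a <> 0.

Lemma D_refl d : In d D -> In (lin_refl a d) D.
Proof. intros Hd. apply (HW (lin_refl a)); auto. exists (a :: nil). split.
  constructor; auto. intros; reflexivity. Qed.

Lemma DDuD_refl z : DDuD D z -> DDuD D (lin_refl a z).
Proof. intros [H|[d1 [d2 [H1 [H2 ->]]]]]. left; apply D_refl; auto.
  right. exists (lin_refl a d1), (lin_refl a d2). repeat split; try apply D_refl; auto.
  apply lin_refl_add. Qed.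

Lemma DDuD_list : exists L, NoDup L /\ forall z, In z L <-> DDuD D z.
Proof.
  destruct (nodup_exists (D ++ flat_map (fun d1 => map (fun d2 => vadd d1 d2) D) D)) as [L [HL HI]].
  exists L; split; auto. intros z. rewrite HI, in_app_iff, in_flat_map. unfold DDuD. split.
  - intros [h|[d1 [h1 h2]]]; [left; auto|]. right. rewrite in_map_iff in h2. destruct h2 as [d2 [<- h2]].
    exists d1, d2; auto.
  - intros [h|[d1 [d2 [h1 [h2 ->]]]]]; [left; auto|]. right. exists d1; split; auto. apply in_map; auto.
Qed.

Lemma zono_zero : in_zonotope (DDuD D) vzero.
Proof. destruct DDuD_list as [L [HL HI]]. exists L; split; auto; split; auto.
  exists (fun _ => 0). split. intros; lra.
  change (vzero = VS L (fun z => vscale 0 z)). symmetry; apply VS_zero. intros; vring. Qed.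

Lemma zshift d z beta : In d D -> dot d a <> 0 -> in_zonotope (DDuD D) z ->
  Rabs beta <= Rabs (2 * dot d a / dot a a) ->
  in_zonotope (DDuD D) (vadd (vsub z (vscale (dot a z / dot a a) a)) (vscale beta a)).
Proof.
  intros Hd Hda [L [HLnd [HLI [t [Ht Hz]]]]] Hb.
  set (m := 2 * dot d a / dot a a) in *.
  assert (Hm : m <> 0).
  { assert (Em : dot d a = m * dot a a / 2) by (unfold m; field; auto). intro E; apply Hda; rewrite Em, E; lra. }
  set (s := lin_refl a).
  assert (Hinv : forall x, s (s x) = x) by (intros; apply lin_refl_invol; auto).
  assert (Hperm : Permutation L (map s L)).
  { apply perm_invol; auto. intros x Hx. apply HLI, DDuD_refl, HLI; auto. }
  change (z = VS L (fun x => vscale (t x) x)) in Hz.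
  assert (Hsz : s z = VS L (fun x => vscale (t (s x)) x)).
  { rewrite Hz. unfold s. rewrite VS_lin by (apply lin_refl_zero || apply lin_refl_add).
    rewrite (VS_perm L (map s L) (fun x => lin_refl a (vscale (t x) x)) Hperm). rewrite VS_map. apply VS_ext. intros x _.
    rewrite lin_refl_scale. f_equal. apply (Hinv x). }
  set (g := fun x => (t x + t (s x)) / 2).
  assert (Hg : VS L (fun x => vscale (g x) x) = vsub z (vscale (dot a z / dot a a) a)).
  { transitivity (vscale (1/2) (vadd z (s z))).
    - rewrite Hsz, Hz at 1. rewrite <- VS_add, <- VS_scale. apply VS_ext; intros; unfold g. vext; unfold vadd, vscale. field.
    - unfold s, lin_refl. rewrite dot_comm. vext; unfold vsub, vadd, vscale, vopp; field; auto. }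
  set (e := vscale m a).
  assert (He : DDuD D e).
  { right. exists d, (vopp (lin_refl a d)). repeat split; auto. apply Hsym, D_refl; auto.
    unfold e, m, lin_refl. vext; unfold vsub, vadd, vscale, vopp; field; auto. }
  assert (Hme : DDuD D (vopp e)).
  { right. exists (vopp d), (lin_refl a d). repeat split; auto. apply D_refl; auto.
    unfold e, m, lin_refl. vext; unfold vsub, vadd, vscale, vopp; field; auto. }
  assert (Hne : e <> vopp e).
  { intro E. assert (a = vzero).
    { vext. assert (E' := f_equal (fun f => f x) E). unfold e, vscale, vopp, vzero in *. simpl in E'.
      apply (Rmult_eq_reg_l (2 * m)); [|lra]. lra. }
    subst a. rewrite dot_zero_r in Haa. lra. }
  assert (Hse : s e = vopp e).
  { unfold s, e, lin_refl. rewrite dot_scale_l. vext; unfold vsub, vadd, vscale, vopp; field; auto. }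
  assert (Hsme : s (vopp e) = e) by (rewrite <- Hse; apply Hinv).
  assert (Hge : g e = g (vopp e)) by (unfold g; rewrite Hse, Hsme; lra).
  set (gam := beta / m).
  assert (Hgam : Rabs gam <= 1).
  { unfold gam. unfold Rdiv. rewrite Rabs_mult, Rabs_inv.
    assert (0 < Rabs m) by (apply Rabs_pos_lt; auto).
    apply (Rmult_le_reg_r (Rabs m)); auto. field_simplify; lra. }
  assert (Hgam2 : -1 <= gam <= 1) by (revert Hgam; unfold Rabs; destruct (Rcase_abs gam); lra). clear Hgam.
  set (g' := fun x => if excluded_middle_informative (x = e) then (1 + gam) / 2
              else if excluded_middle_informative (x = vopp e) then (1 - gam) / 2 else g x).
  set (H1 := fun x => if excluded_middle_informative (x = e) then vscale ((1 + gam) / 2 - g x) x else vzero).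
  set (H2 := fun x => if excluded_middle_informative (x = vopp e) then vscale ((1 - gam) / 2 - g x) x else vzero).
  assert (Hsplit : VS L (fun x => vscale (g' x) x) = vadd (VS L (fun x => vscale (g x) x)) (vadd (VS L H1) (VS L H2))).
  { rewrite <- !VS_add. apply VS_ext. intros x _. unfold g', H1, H2.
    destruct (excluded_middle_informative (x = e)) as [->|h1];
    destruct (excluded_middle_informative (e = vopp e)) as [h|h]; try contradiction;
    try destruct (excluded_middle_informative (x = vopp e)) as [->|h2]; vring. }
  assert (HV1 : VS L H1 = vscale ((1 + gam) / 2 - g e) e).
  { rewrite (VS_single _ _ e); auto. unfold H1. destruct (excluded_middle_informative (e = e)); [auto|contradiction].
    apply HLI; auto. intros x hx. unfold H1. destruct (excluded_middle_informative (x = e)); [contradiction|auto]. }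
  assert (HV2 : VS L H2 = vscale ((1 - gam) / 2 - g e) (vopp e)).
  { rewrite (VS_single _ _ (vopp e)); auto. unfold H2. destruct (excluded_middle_informative (vopp e = vopp e)); [|contradiction].
    rewrite Hge; auto. apply HLI; auto.
    intros x hx. unfold H2. destruct (excluded_middle_informative (x = vopp e)); [contradiction|auto]. }
  exists L; split; auto; split; auto. exists g'. split.
  - intros x. pose proof (Ht x). pose proof (Ht (s x)). unfold g', g.
    destruct (excluded_middle_informative (x = e)); [lra|].
    destruct (excluded_middle_informative (x = vopp e)); lra.
  - change (vadd (vsub z (vscale (dot a z / dot a a) a)) (vscale beta a) = VS L (fun x => vscale (g' x) x)).
    rewrite Hsplit, HV1, HV2, Hg. unfold e, gam. vext; unfold vsub, vadd, vscale, vopp; field; auto.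
Qed.
End Zono.
Lemma inf_exists (S : R -> Prop) : (exists r, S r) -> (forall r, S r -> 0 <= r) -> exists m, is_inf S m.
Proof. intros Hne Hpos.
  destruct (completeness (fun x => S (- x))) as [l [Hub Hlub]].
  - exists 0. intros x Hx. apply Hpos in Hx. lra.
  - destruct Hne as [r Hr]. exists (- r). rewrite Ropp_involutive; auto.
  - exists (- l). split.
    + intros r Hr. assert (- r <= l) by (apply Hub; rewrite Ropp_involutive; auto). lra.
    + intros m' Hm'. assert (l <= - m'). { apply Hlub. intros x Hx. apply Hm' in Hx. lra. } lra.
Qed.

Lemma inf_eq S1 S2 m1 m2 : is_inf S1 m1 -> is_inf S2 m2 ->
  (forall r1, S1 r1 -> exists r2, S2 r2 /\ r2 <= r1) ->
  (forall r2, S2 r2 -> exists r1, S1 r1 /\ r1 <= r2) -> m1 = m2.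
Proof. intros [L1 G1] [L2 G2] H12 H21.
  assert (m2 <= m1). { apply G1. intros r1 h. destruct (H12 r1 h) as [r2 [h2 le]]. apply L2 in h2. lra. }
  assert (m1 <= m2). { apply G2. intros r2 h. destruct (H21 r2 h) as [r1 [h1 le]]. apply L1 in h1. lra. }
  lra. Qed.

Section Dist.
Context {n : nat} (Phi : list (vec n)) (D : list (vec n)) (a d : vec n).
Hypothesis HW : W_invariant Phi D.
Hypothesis Hsym : symmetric_set D.
Hypothesis Ha : In a Phi.
Hypothesis Haa : dot a a <> 0.
Hypothesis Hd : In d D.
Hypothesis Hda : 1 <= Rabs (dot d a).

Definition Sset (u : vec n) := fun r => exists z, in_zonotope (DDuD D) z /\ r = vnorm (vsub u z).

Lemma dist_spec u : is_inf (Sset u) (dist_set u (in_zonotope (DDuD D))).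
Proof. unfold dist_set. apply epsilon_spec. apply inf_exists.
  - exists (vnorm (vsub u vzero)), vzero. split; auto. apply zono_zero; auto.
  - intros r [z [_ ->]]. apply vnorm_nonneg. Qed.

Lemma shift_dir u1 gam : Rabs (dot a (vadd u1 (vscale gam a))) <= 2 ->
  forall r1, Sset u1 r1 -> exists r2, Sset (vadd u1 (vscale gam a)) r2 /\ r2 <= r1.
Proof.
  intros Hb r1 [z [Hz ->]]. set (u2 := vadd u1 (vscale gam a)) in *.
  assert (Hpos : 0 < dot a a) by (pose proof (dot_nonneg n a); lra).
  set (beta := dot a u2 / dot a a).
  set (z' := vadd (vsub z (vscale (dot a z / dot a a) a)) (vscale beta a)).
  assert (Hz' : in_zonotope (DDuD D) z').
  { apply (zshift Phi D a HW Hsym Ha Haa d); auto.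
    intro E. rewrite E, Rabs_R0 in Hda. lra.
    unfold beta. unfold Rdiv. rewrite !Rabs_mult, (Rabs_inv (dot a a)).
    rewrite (Rabs_right (2)) by lra.
    assert (0 < Rabs (dot a a)) by (apply Rabs_pos_lt; auto).
    assert (0 < / Rabs (dot a a)) by (apply Rinv_0_lt_compat; auto).
    apply Rmult_le_compat_r; [lra|]. lra. }
  exists (vnorm (vsub u2 z')). split. exists z'; auto.
  apply vnorm_le. set (w := vsub u2 z').
  assert (Hw : dot w a = 0).
  { unfold w, z'. rewrite dot_sub_l, dot_add_l, dot_sub_l, !dot_scale_l, (dot_comm _ u2 a), (dot_comm _ z a).
    unfold beta. field; auto. }
  set (del := beta - dot a z / dot a a - gam).
  assert (E : vsub u1 z = vadd w (vscale del a)).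
  { unfold w, z', u2, del. vext; unfold vsub, vadd, vscale, vopp. ring. }
  rewrite E, dot_add_l, !dot_add_r, !dot_scale_l, !dot_scale_r, (dot_comm _ a w), Hw.
  pose proof (Rle_0_sqr del). unfold Rsqr in H. nra.
Qed.

Lemma dist_shift u1 gam : Rabs (dot a u1) <= 2 -> Rabs (dot a (vadd u1 (vscale gam a))) <= 2 ->
  dist_set u1 (in_zonotope (DDuD D)) = dist_set (vadd u1 (vscale gam a)) (in_zonotope (DDuD D)).
Proof. intros H1 H2. apply (inf_eq _ _ _ _ (dist_spec u1) (dist_spec _)).
  - apply shift_dir; auto.
  - intros r2 Hr2. assert (E : u1 = vadd (vadd u1 (vscale gam a)) (vscale (- gam) a)) by vring.
    rewrite E in H1. destruct (shift_dir _ _ H1 r2 Hr2) as [r [Hr le]]. rewrite <- E in Hr. eauto.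
Qed.
End Dist.
Section Final.
Context {n : nat} (Phi : list (vec n)) (o : vec n).

Lemma lam_bound a (s : vec n -> Prop) y0 x (k : Z) : s y0 -> dot a (vsub y0 o) = IZR k ->
  in_star Phi o s x -> In a Phi -> Rabs (dot a (vsub x o) - IZR k) <= 1.
Proof.
  intros Hs0 Hk [t [r [[xt Ht] [Hst [_ [Hrt Hrx]]]]]] Ha.
  assert (Cy : in_closure t y0) by (apply Hst; auto).
  assert (Cx : in_closure t x) by (apply Hrt; auto).
  set (P := dot a (vsub x o)).
  destruct (approx o t y0 a (1/2) Cy) as [z' [Hz' Hd']]; [lra|].
  rewrite Hk in Hd'.
  apply Ht in Hz'.
  unfold Rabs; destruct (Rcase_abs (P - IZR k)).
  - destruct (Rle_dec (- (P - IZR k)) 1) as [|Hc]; auto. exfalso.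
    destruct (approx o t x a (IZR k - 1 - P) Cx) as [z [Hz Hd]]; [lra|].
    apply Ht in Hz. fold P in Hd.
    destruct (Hz a (k - 1)%Z Ha) as [[A1 A2] _]. destruct (Hz' a (k - 1)%Z Ha) as [[B1 B2] _].
    rewrite minus_IZR in *. revert Hd Hd'. unfold Rabs.
    destruct (Rcase_abs (P - dot a (vsub z o))); destruct (Rcase_abs (IZR k - dot a (vsub z' o))); intros;
    [ assert (dot a (vsub z o) < IZR k - 1) by lra | assert (dot a (vsub z o) < IZR k - 1) by lra
    | assert (dot a (vsub z o) < IZR k - 1) by lra | assert (dot a (vsub z o) < IZR k - 1) by lra ];
    assert (dot a (vsub z' o) < IZR k - 1) by (apply B1, A2; auto); lra.
  - destruct (Rle_dec (P - IZR k) 1) as [|Hc]; auto. exfalso.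
    destruct (approx o t x a (P - (IZR k + 1)) Cx) as [z [Hz Hd]]; [lra|].
    apply Ht in Hz. fold P in Hd.
    destruct (Hz a (k + 1)%Z Ha) as [[A1 A2] _]. destruct (Hz' a (k + 1)%Z Ha) as [[B1 B2] _].
    rewrite plus_IZR in *. revert Hd Hd'. unfold Rabs.
    destruct (Rcase_abs (P - dot a (vsub z o))); destruct (Rcase_abs (IZR k - dot a (vsub z' o))); intros;
    assert (dot a (vsub z' o) < IZR k + 1) by lra;
    assert (dot a (vsub z o) < IZR k + 1) by (apply A1, B2; auto); lra.
Qed.

Lemma star_of (S : vec n -> Prop) y0 x1 v : (forall y, S y -> same_cell Phi o y0 y) ->
  weak Phi o x1 y0 -> weak Phi o x1 v -> is_vertex Phi o v -> in_star Phi o S v.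
Proof. intros HS H1 H2 Hv. exists (same_cell Phi o x1), (fun y => y = v). split; [exists x1; tauto|].
  split. intros y Hy. apply closure_if. apply (weak_transfer Phi o x1 y0); auto.
  split; auto. split. intros y ->. apply closure_if; auto. auto. Qed.

Definition pt c r := vadd o (vscale r c).

Lemma five (z : Z) : IZR z <= -2 \/ IZR z = -1 \/ IZR z = 0 \/ IZR z = 1 \/ 2 <= IZR z.
Proof. destruct (Z_le_gt_dec z (-2)) as [h|h]; [left; apply IZR_le in h; auto|].
  destruct (Z_le_gt_dec 2 z) as [h2|h2]; [right; right; right; right; apply IZR_le in h2; auto|].
  assert (hz : (z = -1 \/ z = 0 \/ z = 1)%Z) by lia. destruct hz as [->|[->| ->]]; simpl; lra. Qed.

Lemma weak_pt c r1 r2 : (forall b, In b Phi -> exists z, dot b c = IZR z) ->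
  (forall b, In b Phi -> Rabs (dot b c) <= 2) ->
  (forall zv kv, (zv = -2 \/ zv = -1 \/ zv = 0 \/ zv = 1 \/ zv = 2) ->
     (kv <= -2 \/ kv = -1 \/ kv = 0 \/ kv = 1 \/ 2 <= kv) ->
     (r1*zv < kv -> r2*zv <= kv) /\ (r1*zv = kv -> r2*zv = kv) /\ (kv < r1*zv -> kv <= r2*zv)) ->
  weak Phi o (pt c r1) (pt c r2).
Proof. intros HL HB Hc b k Hb. unfold pt.
  replace (vsub (vadd o (vscale r1 c)) o) with (vscale r1 c) by vring.
  replace (vsub (vadd o (vscale r2 c)) o) with (vscale r2 c) by vring.
  rewrite !dot_scale_r. destruct (HL b Hb) as [z Hz]. pose proof (HB b Hb) as Hzb. rewrite Hz in *.
  apply Hc; [|apply five].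
  revert Hzb; unfold Rabs; destruct (Rcase_abs (IZR z)); intros; destruct (five z) as [?|[?|[?|[?|?]]]]; lra.
Qed.

Ltac wcheck := intros zv kv Hz Hk; destruct Hz as [->|[->|[->|[->| ->]]]];
  destruct Hk as [?|[->|[->|[->|?]]]]; repeat split; intros; lra.

End Final.
Lemma absB x c : Rabs x <= c -> -c <= x <= c.
Proof. unfold Rabs; destruct (Rcase_abs x); intros; lra. Qed.
Lemma absI x c : -c <= x <= c -> Rabs x <= c.
Proof. unfold Rabs; destruct (Rcase_abs x); intros; lra. Qed.

Ltac wcheck := intros zv kv Hz Hk; destruct Hz as [ -> | [ -> | [ -> | [ -> | -> ]]]];
  destruct Hk as [ ? | [ -> | [ -> | [ -> | ? ]]]]; repeat split; intros; lra.

Theorem mainTheorem19 (n : nat) (Phi : list (vec n)) (o : vec n)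
  (Sp Sm : Type) (ip : Sp -> vec n) (jp : vec n -> Sp)
  (im : Sm -> vec n) (jm : vec n -> Sm) (op : Sp -> Sm)
  (D : list (vec n)) (sp : Sp -> Prop) (sm : Sm -> Prop) (a : vec n) (k : Z) :
  is_root_system Phi ->
  (forall x, jp (ip x) = x) -> (forall y, ip (jp y) = y) ->
  (forall x, jm (im x) = x) -> (forall y, im (jm y) = y) ->
  (forall x, ip x = im (op x)) ->
  W_invariant Phi D -> symmetric_set D -> rich Phi o ip D ->
  S_cell Phi o ip sp -> S_cell Phi o im sm ->
  In a Phi ->
  (forall x, sp x -> on_wall o a k (ip x)) ->
  (forall x, sm x -> on_wall o a k (im x)) ->
  (forall xp xm, S_star Phi o ip sp xp -> S_star Phi o im sm xm ->
     height D ip im (jp (aff_refl o a k (ip xp))) xm = height D ip im xp xm) /\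
  (forall xp xm, S_star Phi o ip sp xp -> S_star Phi o im sm xm ->
     height D ip im xp (jm (aff_refl o a k (im xm))) = height D ip im xp xm).
Proof.
  intros HR Hjp Hpj Hjm Hmj Hop HW Hsym Hrich [yp Hyp] [ym Hym] Ha Hwp Hwm.
  pose proof HR as [Hnz [Hcl [Hcr Hsp]]].
  assert (Haa : dot a a <> 0) by (pose proof (dot_pos n a (Hnz a Ha)); lra).
  assert (Ep : exists x0, sp x0 /\ ip x0 = yp).
  { destruct (proj2 (Hyp yp)) as [x0 [h1 h2]]. intros b kk _; split; split; auto. eauto. }
  destruct Ep as [xp0 [Hxp0 Exp0]].
  assert (Em : exists x0, sm x0 /\ im x0 = ym).
  { destruct (proj2 (Hym ym)) as [x0 [h1 h2]]. intros b kk _; split; split; auto. eauto. }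
  destruct Em as [xm0 [Hxm0 Exm0]].
  destruct (exists_short Phi a HR Ha) as [c [HLc [Hac Hc2]]].
  assert (HcD : In c D).
  { set (y0 := pt o c (1/2)).
    set (s := fun x => same_cell Phi o y0 (ip x)).
    assert (Himg : forall y, image ip s y -> same_cell Phi o y0 y).
    { intros y [x [hx <-]]; auto. }
    assert (Hcell : S_cell Phi o ip s).
    { exists y0. intros y; split; auto. intros hy. exists (jp y). unfold s. rewrite Hpj; auto. }
    assert (Hv1 : is_vertex Phi o (vadd o c)).
    { apply vertex_lattice; auto. intros b hb. destruct (HLc b hb) as [z hz]. exists z.
      replace (vsub (vadd o c) o) with c by vring. auto. }
    assert (Hv0 : is_vertex Phi o o).
    { apply vertex_lattice; auto. intros b hb. exists 0%Z.
      replace (vsub o o) with (@vzero n) by vring. apply dot_zero_r. }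
    assert (E1 : vadd o c = pt o c 1) by (unfold pt; vring).
    assert (E0 : o = pt o c 0) by (unfold pt; vring).
    pose proof (Hrich s (jp (vadd o c)) (jp o) Hcell) as HH.
    unfold S_vertex, S_star in HH. rewrite !Hpj in HH.
    replace c with (vsub (vadd o c) o) by vring.
    apply HH; auto.
    - intros E. apply (f_equal ip) in E. rewrite !Hpj in E. apply Hac.
      replace c with (vsub (vadd o c) o) by vring. rewrite E. replace (vsub o o) with (@vzero n) by vring.
      apply dot_zero_r.
    - apply (star_of Phi o _ y0 (pt o c (3/4))); auto.
      + apply weak_pt; auto. wcheck.
      + rewrite E1. apply weak_pt; auto. wcheck.
    - apply (star_of Phi o _ y0 (pt o c (1/4))); auto.
      + apply weak_pt; auto. wcheck.
      + assert (W : weak Phi o (pt o c (1/4)) (pt o c 0)) by (apply weak_pt; auto; wcheck).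
        rewrite <- E0 in W. exact W. }
  assert (Hda : 1 <= Rabs (dot c a)).
  { destruct (HLc a Ha) as [z Hz]. rewrite dot_comm, Hz. rewrite Hz in Hac.
    assert (z <> 0%Z) by (intro; subst; apply Hac; auto).
    destruct (Z_le_gt_dec 1 z) as [h|h]. apply IZR_le in h. rewrite Rabs_right; lra.
    assert (h2 : (z <= -1)%Z) by lia. apply IZR_le in h2. rewrite Rabs_left; lra. }
  assert (Lp : forall xp, S_star Phi o ip sp xp -> Rabs (dot a (vsub (ip xp) o) - IZR k) <= 1).
  { intros xp Hs. apply (lam_bound Phi o a (image ip sp) yp); auto. exists xp0; auto.
    rewrite <- Exp0. apply Hwp; auto. }
  assert (Lm : forall xm, S_star Phi o im sm xm -> Rabs (dot a (vsub (im xm) o) - IZR k) <= 1).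
  { intros xm Hs. apply (lam_bound Phi o a (image im sm) ym); auto. exists xm0; auto.
    rewrite <- Exm0. apply Hwm; auto. }
  assert (Hdot : forall p q, dot a (vsub p q) = (dot a (vsub p o) - IZR k) - (dot a (vsub q o) - IZR k)).
  { intros p q. replace (vsub p q) with (vsub (vsub p o) (vsub q o)) by vring. rewrite dot_sub_r; ring. }
  split.
  - intros xp xm Hp Hm. unfold height. rewrite Hpj.
    specialize (Lp xp Hp). specialize (Lm xm Hm).
    set (p := ip xp) in *. set (q := im xm) in *.
    set (gam := - (2 * (dot a (vsub p o) - IZR k) / dot a a)).
    replace (vsub (aff_refl o a k p) q) with (vadd (vsub p q) (vscale gam a))
      by (unfold aff_refl, gam; vext; unfold vsub, vadd, vscale, vopp; field; auto).
    symmetry. apply (dist_shift Phi D a c); auto.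
    + rewrite Hdot. apply absI; apply absB in Lp; apply absB in Lm; lra.
    + rewrite dot_add_r, dot_scale_r, Hdot. unfold gam.
      replace (- (2 * (dot a (vsub p o) - IZR k) / dot a a) * dot a a) with (- (2 * (dot a (vsub p o) - IZR k)))
        by (field; auto).
      apply absI; apply absB in Lp; apply absB in Lm; lra.
  - intros xp xm Hp Hm. unfold height. rewrite Hmj.
    specialize (Lp xp Hp). specialize (Lm xm Hm).
    set (p := ip xp) in *. set (q := im xm) in *.
    set (gam := 2 * (dot a (vsub q o) - IZR k) / dot a a).
    replace (vsub p (aff_refl o a k q)) with (vadd (vsub p q) (vscale gam a))
      by (unfold aff_refl, gam; vext; unfold vsub, vadd, vscale, vopp; field; auto).
    symmetry. apply (dist_shift Phi D a c); auto.
    + rewrite Hdot. apply absI; apply absB in Lp; apply absB in Lm; lra.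
    + rewrite dot_add_r, dot_scale_r, Hdot. unfold gam.
      replace (2 * (dot a (vsub q o) - IZR k) / dot a a * dot a a) with (2 * (dot a (vsub q o) - IZR k))
        by (field; auto).
      apply absI; apply absB in Lp; apply absB in Lm; lra.
Qed.
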